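(* Let $f:2^N\to\mathbb R$ be monotone with $f(\emptyset)\ge0$, $|N|=n$ with $\sqrt n$ integer, and let $p$ be a polynomial and $\epsilon\ge f(N)/p(n)$. Given a sufficiently large polynomial number of samples $(S_j,f(S_j))$ with $S_j$ i.i.d. from $\mathcal D^{sub}$, with probability at least $1-O(e^{-n})$ the estimates $\hat v_i=\frac{1}{|\mathcal S_{i,\sqrt n+1}|}\sum_{S\in\mathcal S_{i,\sqrt n+1}}f(S)-\frac{1}{|\mathcal S_{-i,\sqrt n}|}\sum_{S\in\mathcal S_{-i,\sqrt n}}f(S)$ satisfy, for all $e_i\in N$, $\big|\hat v_i-\mathbb E_{S\sim\mathcal D_{\sqrt n}\mid e_i\notin S}[f_S(e_i)]\big|\le\epsilon$.
   Context: $N=\{e_1,\dots,e_n\}$, $f_S(e)=f(S\cup\{e\})-f(S)$. $\mathcal D_j$ is the uniform distribution over subsets of $N$ of size $j$; $\mathcal D^{sub}$ draws from $\mathcal D_k$, $\mathcal D_{\sqrt n}$, $\mathcal D_{\sqrt n+1}$ with probability $1/3$ each, for some $1\le k\le n$. $\mathcal S_{i,j}$ (resp. $\mathcal S_{-i,j}$) is the collection of samples of size $j$ containing (resp. not containing) $e_i$. *)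

(* Defs.v *)
From HB Require Import structures.
From mathcomp Require Import all_boot all_order all_algebra.
From mathcomp Require Import reals.
From mathcomp Require Import sequences exp.
Set Implicit Arguments. Unset Strict Implicit. Unset Printing Implicit Defensive.
Import Order.TTheory GRing.Theory Num.Theory.
Local Open Scope ring_scope.

Section Defs.
Variable R : realType.

Definition monotone_set n (f : {set 'I_n} -> R) : Prop :=
  forall S T : {set 'I_n}, S \subset T -> f S <= f T.

Definition unif_size n (j : nat) (S : {set 'I_n}) : R :=
  (#|S| == j)%:R / ('C(n, j))%:R.

(* D^sub with sqrt n = m: D_k, D_m, D_{m+1} each with probability 1/3 *)
Definition dsub n (m k : nat) (S : {set 'I_n}) : R :=
  3%:R^-1 * unif_size k S + 3%:R^-1 * unif_size m S
  + 3%:R^-1 * unif_size m.+1 S.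

(* probability of an event on M i.i.d. samples from D^sub (product measure) *)
Definition prob_samples n (m k M : nat)
    (E : pred {ffun 'I_M -> {set 'I_n}}) : R :=
  \sum_(s | E s) \prod_(j < M) dsub m k (s j).

(* estimate hat v_i; collections S_{i,j} are taken with multiplicity over the
   sample indices; an empty average is 0 (MathComp: x / 0 = 0) *)
Definition vhat n (m M : nat) (f : {set 'I_n} -> R)
    (s : {ffun 'I_M -> {set 'I_n}}) (i : 'I_n) : R :=
  (\sum_(j < M | (#|s j| == m.+1) && (i \in s j)) f (s j))
    / (#|[set j : 'I_M | (#|s j| == m.+1) && (i \in s j)]|)%:R
  - (\sum_(j < M | (#|s j| == m) && (i \notin s j)) f (s j))
    / (#|[set j : 'I_M | (#|s j| == m) && (i \notin s j)]|)%:R.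

Definition marg_exp n (m : nat) (f : {set 'I_n} -> R) (i : 'I_n) : R :=
  (\sum_(S : {set 'I_n} | (#|S| == m) && (i \notin S)) (f (i |: S) - f S))
    / (#|[set S : {set 'I_n} | (#|S| == m) && (i \notin S)]|)%:R.

End Defs.
Arguments unif_size {R n} j S.
Arguments dsub {R n} m k S.
Arguments prob_samples {R n} m k {M} E.

(* Main.v *)
Require Import Defs.
From HB Require Import structures.
From mathcomp Require Import all_boot all_order all_algebra.
From mathcomp Require Import reals.
From mathcomp Require Import sequences exp.
From mathcomp Require Import ring lra zify.
Import Order.TTheory GRing.Theory Num.Theory.
Local Open Scope ring_scope.

Set Implicit Arguments. Unset Strict Implicit.

Lemma expR_le_quad (R : realType) (y : R) : y <= 1 -> expR y <= 1 + y + 2 * y^+2.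
Proof.
move=> hy.
have e2 : expR y = expR (y/2) ^+ 2 by rewrite expr2 -expRD; congr expR; field.
have h1 : expR (y/2) * expR (- (y/2)) = 1 by exact: expRxMexpNx_1.
have h2 : 1 - y/2 <= expR (- (y/2)) by have := expR_ge1Dx (- (y/2)); lra.
have u0 := expR_gt0 (y/2).
set u := expR (y/2) in e2 h1 u0 *.
have h3 : u * (1 - y/2) <= 1.
  by rewrite -[X in _ <= X]h1; apply: ler_wpM2l; [exact: (ltW u0) | exact: h2].
rewrite e2.
have w0 : 0 < 1 - y/2 by lra.
have h4 : u ^+ 2 * (1 - y/2)^+2 <= 1.
  rewrite -exprMn; have hh : 0 <= u * (1 - y/2) by apply: mulr_ge0; lra.
  nra.
have h5 : 1 <= (1 + y + 2 * y^+2) * (1 - y/2)^+2.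
  have : 0 <= y^+2 * (5 - 2*y) * (1 - y) by apply: mulr_ge0; [apply: mulr_ge0; nra|lra].
  nra.
have w2 : 0 < (1 - y/2)^+2 by apply: exprn_gt0.
rewrite -(ler_pM2r w2); lra.
Qed.

Section Prob.
Variables (R : realType) (T : finType) (P : T -> R) (M : nat).
Hypothesis P0 : forall x, 0 <= P x.
Hypothesis P1 : \sum_x P x = 1.

Definition Pr (E : pred {ffun 'I_M -> T}) : R :=
  \sum_(s | E s) \prod_(j < M) P (s j).

Lemma prodP_ge0 (s : {ffun 'I_M -> T}) : 0 <= \prod_(j < M) P (s j).
Proof. by apply: prodr_ge0 => j _; apply: P0. Qed.

Lemma PrE E : Pr E = \sum_s (E s)%:R * \prod_(j < M) P (s j).
Proof.
rewrite /Pr big_mkcond /=; apply: eq_bigr => s _.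
by case: (E s); rewrite ?mul1r ?mul0r.
Qed.

Lemma Pr_ge0 E : 0 <= Pr E.
Proof. by apply: sumr_ge0 => s _; apply: prodP_ge0. Qed.

Lemma Pr_total : \sum_(s : {ffun 'I_M -> T}) \prod_(j < M) P (s j) = 1.
Proof.
rewrite -(bigA_distr_bigA (fun (j : 'I_M) x => P x)) /=.
by rewrite big1 // => j _; apply: P1.
Qed.

Lemma Pr_le (E F : pred {ffun 'I_M -> T}) :
  (forall s, E s -> F s) -> Pr E <= Pr F.
Proof.
move=> EF; rewrite !PrE; apply: ler_sum => s _.
apply: ler_wpM2r; first exact: prodP_ge0.
by case Es: (E s); rewrite ?(EF _ Es) ?ler_nat.
Qed.

Lemma Pr_compl E : Pr E = 1 - Pr (predC E).
Proof.
rewrite -Pr_total (bigID E) /= /Pr; ring.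
Qed.

Lemma Pr_exists (I : finType) (E : I -> pred {ffun 'I_M -> T}) :
  Pr (fun s => [exists i, E i s]) <= \sum_i Pr (E i).
Proof.
rewrite PrE (eq_bigr _ (fun i _ => PrE (E i))) exchange_big /=.
apply: ler_sum => s _; rewrite -big_distrl /=.
apply: ler_wpM2r; first exact: prodP_ge0.
case: existsP => [[i0 Hi0]|_]; last by apply: sumr_ge0 => i _; apply: ler0n.
rewrite (bigD1 i0) //= Hi0; rewrite -[X in X <= _]addr0; apply: lerD => //.
by apply: sumr_ge0 => i _; apply: ler0n.
Qed.

Lemma Pr_or E F : Pr (fun s => E s || F s) <= Pr E + Pr F.
Proof.
rewrite !PrE -big_split /=; apply: ler_sum => s _.
rewrite -mulrDl; apply: ler_wpM2r; first exact: prodP_ge0.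
by rewrite -natrD ler_nat; case: (E s); case: (F s).
Qed.


Lemma chernoff (X : T -> R) (lam t : R) :
  (forall x, `|X x| <= 1) -> \sum_x P x * X x = 0 -> 0 <= lam <= 1 ->
  Pr (fun s => t <= \sum_(j < M) X (s j))
    <= expR (- (lam * t) + 2 * lam ^+ 2 * M%:R).
Proof.
move=> Xb X0 /andP[l0 l1].
rewrite PrE.
apply: le_trans (_ : _ <= \sum_(s : {ffun 'I_M -> T}) expR (lam * (\sum_(j < M) X (s j) - t))
                            * \prod_(j < M) P (s j)) _.
  apply: ler_sum => s _; apply: ler_wpM2r; first exact: prodP_ge0.
  case: (lerP t (\sum_(j < M) X (s j))) => h /=; last exact: expR_ge0.
  apply: le_trans (expR_ge1Dx _); rewrite lerDl; apply: mulr_ge0 => //; lra.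
have -> : \sum_(s : {ffun 'I_M -> T}) expR (lam * (\sum_(j < M) X (s j) - t)) * \prod_(j < M) P (s j)
   = expR (- (lam * t)) * \sum_(s : {ffun 'I_M -> T})
        \prod_(j < M) (P (s j) * expR (lam * X (s j))).
  rewrite big_distrr /=; apply: eq_bigr => s _.
  rewrite big_split /= mulrCA [LHS]mulrC; congr (_ * _).
  rewrite -expR_sum -expRD; congr expR.
  by rewrite mulrBr mulr_sumr; ring.
rewrite -(bigA_distr_bigA (fun (j : 'I_M) x => P x * expR (lam * X x))) /=.
rewrite prodr_const card_ord.
have hE : \sum_x P x * expR (lam * X x) <= expR (2 * lam ^+ 2).
  apply: le_trans (_ : _ <= 1 + 2 * lam ^+ 2) _; last first.
    by have := expR_ge1Dx (2 * lam ^+ 2).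
  apply: le_trans (_ : _ <= \sum_x P x * (1 + lam * X x + 2 * lam ^+ 2)) _.
    apply: ler_sum => x _; apply: ler_wpM2l => //.
    have hx := Xb x; have hx' : -1 <= X x <= 1 by rewrite -ler_norml.
    apply: le_trans (@expR_le_quad R (lam * X x) _) _.
      by case/andP: hx' => _ h; nra.
    rewrite lerD2l ler_wpM2l // exprMn ler_piMr ?exprn_ge0 //.
    by rewrite -real_normK ?num_real // expr_le1 // normr_ge0.
  rewrite (eq_bigr (fun x => P x + lam * (P x * X x) + 2 * lam ^+ 2 * P x)); last first.
    by move=> x _; ring.
  by rewrite !big_split /= P1 -mulr_sumr -mulr_sumr X0 P1 mulr0 addr0 mulr1.
apply: le_trans (_ : _ <= expR (- (lam * t)) * expR (2 * lam ^+ 2) ^+ M) _.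
  apply: ler_wpM2l; first exact: expR_ge0.
  apply: lerXn2r; rewrite ?nnegrE ?expR_ge0 //.
  by apply: sumr_ge0 => x _; apply: mulr_ge0 => //; apply: expR_ge0.
by rewrite -expRM_natl -expRD [M%:R * _]mulrC.
Qed.

End Prob.

Unset Implicit Arguments. Set Strict Implicit.

Section Class.
Variables (R : realType) (T : finType) (P : T -> R) (M : nat).
Hypothesis P0 : forall x, 0 <= P x.
Hypothesis P1 : \sum_x P x = 1.
Variables (C : pred T) (f : T -> R) (F eps rho : R).
Hypothesis Pconst : forall x y, C x -> C y -> P x = P y.
Hypothesis Cne : (0 < #|[set x | C x]|)%N.
Hypothesis fb : forall x, 0 <= f x <= F.
Hypothesis F0 : 0 < F.
Hypothesis rho0 : 0 < rho.
Hypothesis rho1 : rho <= 1.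
Hypothesis rhoF : rho * F <= eps.

Let q := \sum_(x | C x) P x.
Let a := (\sum_(x | C x) f x) / (#|[set x | C x]|)%:R.
Definition Xd x := (f x - a) * (C x)%:R / F.

Definition ev1 (s : {ffun 'I_M -> T}) := q * M%:R / 2 <= \sum_(j < M) (q - (C (s j))%:R).
Definition ev2 (s : {ffun 'I_M -> T}) := rho * q * M%:R / 4 <= \sum_(j < M) Xd (s j).
Definition ev3 (s : {ffun 'I_M -> T}) := rho * q * M%:R / 4 <= \sum_(j < M) (- Xd (s j)).

Lemma cardC_sum : (#|[set x | C x]|)%:R = \sum_x (C x)%:R :> R.
Proof.
rewrite (eq_card (B := C)); last by move=> x; rewrite inE.
rewrite -sum1_card natr_sum big_mkcond /=; apply: eq_bigr => x _; rewrite unfold_in; by case: (C x).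
Qed.

Lemma cnt_sum (s : {ffun 'I_M -> T}) :
  (#|[set j | C (s j)]|)%:R = \sum_(j < M) (C (s j))%:R :> R.
Proof.
rewrite (eq_card (B := fun j => C (s j))); last by move=> x; rewrite inE.
rewrite -sum1_card natr_sum big_mkcond /=; apply: eq_bigr => x _; rewrite unfold_in; by case: (C (s x)).
Qed.

Lemma q_ge0 : 0 <= q.
Proof. by apply: sumr_ge0 => x _. Qed.

Lemma q_le1 : q <= 1.
Proof.
rewrite -P1 [X in _ <= X](bigID C) /= lerDl; by apply: sumr_ge0 => x _.
Qed.

Lemma a_bounds : 0 <= a <= F.
Proof.
have c0 : 0 < (#|[set x | C x]|)%:R :> R by rewrite ltr0n.
apply/andP; split.
  by apply: divr_ge0; [apply: sumr_ge0 => x _; case/andP: (fb x)|apply: ltW].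
rewrite ler_pdivrMr // cardC_sum mulr_sumr big_mkcond /=.
apply: ler_sum => x _; case: (C x); rewrite ?mulr1 ?mulr0 //.
by case/andP: (fb x).
Qed.

Lemma Xd_bound x : `|Xd x| <= 1.
Proof.
rewrite /Xd normrM normfV (gtr0_norm F0) ler_pdivrMr // mul1r normrM.
case/andP: a_bounds => a0 aF; case/andP: (fb x) => f0 fF.
case: (C x); rewrite ?normr1 ?mulr1 ?normr0 ?mulr0; last exact: ltW.
rewrite ler_norml; apply/andP; split; lra.
Qed.

Lemma sum_ind (I : finType) (g : I -> R) (Q : pred I) :
  \sum_(i | Q i) g i = \sum_i g i * (Q i)%:R.
Proof. by rewrite big_mkcond /=; apply: eq_bigr => i _; case: (Q i); rewrite ?mulr1 ?mulr0. Qed.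

Lemma Xd_mean : \sum_x P x * Xd x = 0.
Proof.
have [x0 Cx0] : exists x0, C x0.
  move: Cne; rewrite card_gt0 => /set0Pn [x0]; rewrite inE => h; by exists x0.
have c0 : (#|[set x | C x]|)%:R != 0 :> R by rewrite pnatr_eq0 -lt0n.
have F0' : F != 0 by apply: lt0r_neq0.
rewrite (eq_bigr (fun x => P x0 / F * ((f x - a) * (C x)%:R))); last first.
  move=> x _; rewrite /Xd; case Cx: (C x); last by rewrite !mulr0 mul0r mulr0.
  by rewrite (Pconst x x0 Cx Cx0); field.
rewrite -mulr_sumr (eq_bigr (fun x => f x * (C x)%:R - a * (C x)%:R)); last first.
  by move=> x _; ring.
rewrite sumrB -sum_ind -mulr_sumr -cardC_sum /a divfK // subrr mulr0 //.
Qed.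

Lemma ev1_bound : Pr P ev1 <= expR (- (rho ^+ 2 * q ^+ 2 * M%:R / 128)).
Proof.
have q0 := q_ge0; have q1 := q_le1.
apply: le_trans (chernoff M P0 P1 (X := fun x => q - (C x)%:R) (lam := q / 8) (q * M%:R / 2) _ _ _) _.
- move=> x; case: (C x); rewrite /= ?mulr1n ?mulr0n ler_norml; apply/andP; split; lra.
- rewrite (eq_bigr (fun x => q * P x - P x * (C x)%:R)); last by move=> x _; ring.
  by rewrite sumrB -mulr_sumr P1 -sum_ind mulr1 subrr.
- apply/andP; split; lra.
rewrite ler_expR.
have r2 : rho ^+ 2 <= 1 by rewrite expr_le1 //; apply: ltW.
have Q0 : 0 <= q ^+ 2 * M%:R by apply: mulr_ge0; [apply: exprn_ge0 | apply: ler0n].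
have : rho ^+ 2 * (q ^+ 2 * M%:R) <= 1 * (q ^+ 2 * M%:R) by apply: ler_wpM2r.
rewrite !expr2 in Q0 *; nra.
Qed.

Lemma ev2_bound : Pr P ev2 <= expR (- (rho ^+ 2 * q ^+ 2 * M%:R / 128)).
Proof.
have q0 := q_ge0; have q1 := q_le1.
apply: le_trans (chernoff M P0 P1 (X := Xd) (lam := rho * q / 16) (rho * q * M%:R / 4) Xd_bound Xd_mean _) _.
- apply/andP; split; first by apply: divr_ge0 => //; apply: mulr_ge0 => //; apply: ltW.
  have : rho * q <= 1 * 1 by apply: ler_pM => //; apply: ltW.
  lra.
by rewrite ler_expR le_eqVlt; apply/orP; left; apply/eqP; field.
Qed.

Lemma ev3_bound : Pr P ev3 <= expR (- (rho ^+ 2 * q ^+ 2 * M%:R / 128)).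
Proof.
have q0 := q_ge0; have q1 := q_le1.
apply: le_trans (chernoff M P0 P1 (X := fun x => - Xd x) (lam := rho * q / 16) (rho * q * M%:R / 4) _ _ _) _.
- by move=> x; rewrite normrN; apply: Xd_bound.
- by rewrite (eq_bigr (fun x => - (P x * Xd x))) ?sumrN ?Xd_mean ?oppr0 // => x _; rewrite mulrN.
- apply/andP; split; first by apply: divr_ge0 => //; apply: mulr_ge0 => //; apply: ltW.
  have : rho * q <= 1 * 1 by apply: ler_pM => //; apply: ltW.
  lra.
by rewrite ler_expR le_eqVlt; apply/orP; left; apply/eqP; field.
Qed.

Lemma class_det (s : {ffun 'I_M -> T}) : ~~ ev1 s -> ~~ ev2 s -> ~~ ev3 s ->
  `|(\sum_(j < M | C (s j)) f (s j)) / (#|[set j | C (s j)]|)%:R - a| <= eps / 2.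
Proof.
have q0 := q_ge0.
rewrite /ev1 /ev2 /ev3 -!ltNge => h1 h2 h3.
rewrite cnt_sum.
set N := \sum_(j < M) (C (s j))%:R.
set A := \sum_(j < M | C (s j)) f (s j).
have eD : \sum_(j < M) Xd (s j) = (A - a * N) / F.
  rewrite /Xd -mulr_suml; congr (_ / _).
  rewrite (eq_bigr (fun j => f (s j) * (C (s j))%:R - a * (C (s j))%:R)); last by move=> j _; ring.
  by rewrite sumrB -mulr_sumr /A (@sum_ind _ (fun j => f (s j))).
have eN : \sum_(j < M) (q - (C (s j))%:R) = q * M%:R - N.
  by rewrite sumrB sumr_const card_ord mulr_natr.
rewrite eN in h1; rewrite eD in h2; rewrite sumrN eD in h3.
have qM0 : 0 <= q * M%:R by apply: mulr_ge0 => //; apply: ler0n.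
have N0 : 0 < N by lra.
have e0 : 0 <= eps := le_trans (ltW (mulr_gt0 rho0 F0)) rhoF.
set D := (A - a * N) / F in h2 h3.
have eA : A - a * N = F * D by rewrite /D; field; apply: lt0r_neq0.
have -> : A / N - a = (F * D) / N by rewrite -eA; field; apply: lt0r_neq0.
rewrite normrM normfV (gtr0_norm N0) normrM (gtr0_norm F0) ler_pdivrMr //.
have hD : `|D| <= rho * q * M%:R / 4 by rewrite ler_norml; apply/andP; split; lra.
have hFD : F * `|D| <= F * (rho * q * M%:R / 4) by apply: ler_wpM2l => //; apply: ltW.
have hr : F * (rho * q * M%:R / 4) = (rho * F) * (q * M%:R) / 4 by ring.
have h4 : (rho * F) * (q * M%:R) <= eps * (q * M%:R) by apply: ler_wpM2r.
have h5 : eps * (q * M%:R) <= eps * (2 * N) by apply: ler_wpM2l => //; lra.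
lra.
Qed.

End Class.


Lemma poly_bound (R : realType) (p : {poly R}) :
  exists K D : nat, forall x : R, 1 <= x -> p.[x] <= K%:R * x ^+ D.
Proof.
set S := \sum_(i < size p) `|p`_i|.
have S0 : 0 <= S by apply: sumr_ge0 => i _.
exists (Num.bound S), (size p) => x x1.
have x0 : 0 <= x by lra.
rewrite horner_coef.
apply: le_trans (_ : _ <= \sum_(i < size p) `|p`_i| * x ^+ size p) _.
  apply: ler_sum => i _; apply: le_trans (ler_norm _) _.
  rewrite normrM (ger0_norm (exprn_ge0 _ x0)); apply: ler_wpM2l => //.
  by apply: ler_weXn2l => //; apply: ltnW.
rewrite -mulr_suml; apply: ler_wpM2r; first exact: exprn_ge0.
exact: ltW (archi_boundP S0).
Qed.

Lemma term_ge0 (R : realType) (b c : nat) : 0 <= 3^-1 * (b%:R / c%:R) :> R.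
Proof. by apply: mulr_ge0; [rewrite invr_ge0 ler0n | apply: divr_ge0; apply: ler0n]. Qed.

Section Comb.
Variables (R : realType) (n m k : nat) (i : 'I_n).
Hypothesis mn : (m.+1 <= n)%N.
Hypothesis kn : (k <= n)%N.

Definition C1 (S : {set 'I_n}) := (#|S| == m.+1) && (i \in S).
Definition C2 (S : {set 'I_n}) := (#|S| == m) && (i \notin S).

Lemma reindexC (g : {set 'I_n} -> R) :
  \sum_(T | C1 T) g T = \sum_(S | C2 S) g (i |: S).
Proof.
rewrite (reindex_onto (fun S => i |: S) (fun T => T :\ i)); last first.
  by move=> T /andP[_ iT]; rewrite setD1K.
apply: eq_bigl => S; rewrite /C1 /C2 setU11 andbT.
case iS: (i \in S) => /=.
  rewrite andbF; apply/negbTE; rewrite negb_and; apply/orP; right.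
  apply/negP => /eqP h; move: iS; rewrite -h; by rewrite setD11.
by rewrite setU1K ?iS // eqxx !andbT cardsU1 iS.
Qed.

Lemma card_sumR (C : pred {set 'I_n}) :
  (#|[set x | C x]|)%:R = \sum_(x | C x) (1 : R).
Proof.
rewrite cardC_sum [RHS]big_mkcond /=; apply: eq_bigr => x _; by case: (C x).
Qed.

Lemma cardC1C2 : #|[set S | C1 S]| = #|[set S | C2 S]|.
Proof.
apply/eqP; rewrite -(eqr_nat R) !card_sumR; apply/eqP.
exact: (reindexC (fun _ => 1)).
Qed.

Lemma cardC2 : #|[set S | C2 S]| = 'C(n.-1, m).
Proof.
have := cards_draws ([set: 'I_n] :\ i) m.
have -> : #|[set: 'I_n] :\ i| = n.-1.
  have := cardsD1 i [set: 'I_n]; rewrite in_setT cardsT add1n => h.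
  by rewrite -[in RHS](card_ord n) h.
move=> <-; apply: eq_card => S; rewrite !inE subsetD1 subsetT /= /C2 andbC.
by [].
Qed.

Lemma dsub_ge0 (S : {set 'I_n}) : 0 <= dsub (R:=R) (n:=n) m k S.
Proof.
rewrite /dsub /unif_size.
by apply: addr_ge0; [apply: addr_ge0|]; apply: term_ge0.
Qed.

Lemma unif_sum j : (j <= n)%N -> \sum_(S : {set 'I_n}) unif_size j S = 1 :> R.
Proof.
move=> jn; rewrite /unif_size -mulr_suml.
have := @cardC_sum R _ (fun S : {set 'I_n} => #|S| == j).
rewrite card_draws card_ord => <-.
by rewrite divff // pnatr_eq0 -lt0n bin_gt0.
Qed.

Lemma dsub_sum : \sum_(S : {set 'I_n}) dsub (R:=R) (n:=n) m k S = 1 :> R.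
Proof.
rewrite /dsub !big_split /= -!mulr_sumr !unif_sum //; first by field.
- exact: ltnW.
Qed.

Lemma dsub_const (S T : {set 'I_n}) : #|S| = #|T| -> dsub (R:=R) (n:=n) m k S = dsub (R:=R) (n:=n) m k T.
Proof. by rewrite /dsub /unif_size => ->. Qed.

Lemma q1_lb : 1 <= 3 * n%:R * \sum_(S | C1 S) dsub (R:=R) (n:=n) m k S :> R.
Proof.
have lb : forall S, C1 S -> 3^-1 / ('C(n, m.+1))%:R <= dsub (R:=R) (n:=n) m k S :> R.
  move=> S /andP [/eqP hS _]; rewrite /dsub /unif_size hS eqxx mul1r.
  have h1 : 0 <= 3^-1 * ((m.+1 == k)%:R / ('C(n, k))%:R) :> R.
    exact: term_ge0.
  have h2 : 0 <= 3^-1 * ((m.+1 == m)%:R / ('C(n, m))%:R) :> R.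
    exact: term_ge0.
  rewrite mulrA; lra.
apply: le_trans (_ : _ <= 3 * n%:R * \sum_(S | C1 S) (3^-1 / ('C(n, m.+1))%:R)) _; last first.
  apply: ler_wpM2l; first by apply: mulr_ge0 => //; apply: ler0n.
  by apply: ler_sum => S; apply: lb.
rewrite (eq_bigr (fun _ => 3^-1 / ('C(n, m.+1))%:R * 1)); last by move=> *; rewrite mulr1.
rewrite -mulr_sumr -card_sumR cardC1C2 cardC2.
have e := mul_bin_diag n m.
have e' : n%:R * ('C(n.-1, m))%:R = (m.+1)%:R * ('C(n, m.+1))%:R :> R by rewrite -!natrM e.
have c0 : ('C(n, m.+1))%:R != 0 :> R by rewrite pnatr_eq0 -lt0n bin_gt0.
have -> : 3 * n%:R * (3^-1 / ('C(n, m.+1))%:R * ('C(n.-1, m))%:R) = (m.+1)%:R :> R.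
  have e'' : (m.+1)%:R = n%:R * ('C(n.-1, m))%:R / ('C(n, m.+1))%:R :> R by rewrite e' mulfK.
  by rewrite e''; field.
by rewrite ler1n.
Qed.

Lemma q2_lb : 1 <= 3 * n%:R * \sum_(S | C2 S) dsub (R:=R) (n:=n) m k S :> R.
Proof.
have lb : forall S, C2 S -> 3^-1 / ('C(n, m))%:R <= dsub (R:=R) (n:=n) m k S :> R.
  move=> S /andP [/eqP hS _]; rewrite /dsub /unif_size hS eqxx mul1r.
  have h1 : 0 <= 3^-1 * ((m == k)%:R / ('C(n, k))%:R) :> R.
    exact: term_ge0.
  have h2 : 0 <= 3^-1 * ((m == m.+1)%:R / ('C(n, m.+1))%:R) :> R.
    exact: term_ge0.
  rewrite mulrA; lra.
apply: le_trans (_ : _ <= 3 * n%:R * \sum_(S | C2 S) (3^-1 / ('C(n, m))%:R)) _; last first.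
  apply: ler_wpM2l; first by apply: mulr_ge0 => //; apply: ler0n.
  by apply: ler_sum => S; apply: lb.
rewrite (eq_bigr (fun _ => 3^-1 / ('C(n, m))%:R * 1)); last by move=> *; rewrite mulr1.
rewrite -mulr_sumr -card_sumR cardC2.
have e := mul_bin_down n m.
have e' : n%:R * ('C(n.-1, m))%:R = (n - m)%:R * ('C(n, m))%:R :> R by rewrite -!natrM e.
have c0 : ('C(n, m))%:R != 0 :> R by rewrite pnatr_eq0 -lt0n bin_gt0; apply: ltnW.
have -> : 3 * n%:R * (3^-1 / ('C(n, m))%:R * ('C(n.-1, m))%:R) = (n - m)%:R :> R.
  have e'' : (n - m)%:R = n%:R * ('C(n.-1, m))%:R / ('C(n, m))%:R :> R by rewrite e' mulfK.
  by rewrite e''; field.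
by rewrite ler1n subn_gt0.
Qed.

End Comb.

Set Implicit Arguments. Unset Strict Implicit.

Definition badC (R : realType) (T : finType) (P : T -> R) (M : nat) (C : pred T)
  (f : T -> R) (F rho : R) (s : {ffun 'I_M -> T}) :=
  [|| ev1 R T P M C s, ev2 R T P M C f F rho s | ev3 R T P M C f F rho s].

Lemma badC_bound (R : realType) (T : finType) (P : T -> R) (M : nat)
  (P0 : forall x, 0 <= P x) (P1 : \sum_x P x = 1) (C : pred T) (f : T -> R) (F rho : R)
  (Pconst : forall x y, C x -> C y -> P x = P y)
  (Cne : (0 < #|[set x | C x]|)%N) (fb : forall x, 0 <= f x <= F)
  (F0 : 0 < F) (rho0 : 0 < rho) (rho1 : rho <= 1) (y : R) :
  y <= rho ^+ 2 * (\sum_(x | C x) P x) ^+ 2 * M%:R / 128 ->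
  Pr P (@badC R T P M C f F rho) <= 3 * expR (- y).
Proof.
move=> hy.
have hb : expR (- (rho ^+ 2 * (\sum_(x | C x) P x) ^+ 2 * M%:R / 128)) <= expR (- y).
  by rewrite ler_expR lerN2.
have h1 := ev1_bound R T P M P0 P1 C rho rho0 rho1.
have h2 := ev2_bound R T P M P0 P1 C f F rho Pconst Cne fb F0 rho0 rho1.
have h3 := ev3_bound R T P M P0 P1 C f F rho Pconst Cne fb F0 rho0 rho1.
apply: le_trans (Pr_or P0 _ _) _.
apply: le_trans (lerD (lexx _) (Pr_or P0 _ _)) _.
lra.
Qed.

Lemma marg_split (R : realType) n m (i : 'I_n) (f : {set 'I_n} -> R) :
  marg_exp m f i =
  (\sum_(T | C1 n m i T) f T) / (#|[set T | C1 n m i T]|)%:R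
  - (\sum_(S | C2 n m i S) f S) / (#|[set S | C2 n m i S]|)%:R.
Proof.
rewrite /marg_exp sumrB mulrBl (@reindexC R n m i (fun T => f T)) (cardC1C2 R n m i).
by [].
Qed.

Lemma comb_abs (R : realType) (x1 x2 a1 a2 e : R) :
  `|x1 - a1| <= e / 2 -> `|x2 - a2| <= e / 2 -> `|x1 - x2 - (a1 - a2)| <= e.
Proof.
move=> h1 h2; have -> : x1 - x2 - (a1 - a2) = (x1 - a1) - (x2 - a2) by ring.
apply: le_trans (ler_normB _ _) _; lra.
Qed.

Unset Implicit Arguments. Set Strict Implicit.

Theorem lemma19 (R : realType) (p : {poly R}) :
  exists (c d : nat) (C : R),
  forall (m : nat), (2 <= m)%N ->
  forall (k : nat), (1 <= k <= m ^ 2)%N ->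
  forall (f : {set 'I_(m ^ 2)} -> R),
    monotone_set f -> 0 <= f set0 ->
    0 < p.[(m ^ 2)%:R] ->
  forall eps : R, f setT / p.[(m ^ 2)%:R] <= eps ->
  forall M : nat, (c * (m ^ 2) ^ d <= M)%N ->
    1 - C * expR (- (m ^ 2)%:R) <=
    prob_samples m k
      (fun s : {ffun 'I_M -> {set 'I_(m ^ 2)}} =>
         [forall i : 'I_(m ^ 2), `|vhat m f s i - marg_exp m f i| <= eps]).
Proof.
have [K [D pb]] := poly_bound R p.
exists (2304 * K.+1 ^ 2)%N, (3 + 2 * D)%N, 6.
move=> m m2 k /andP[k1 kn] f fmon f0 p0 eps heps M hM.
have mn : (m < m ^ 2)%N by rewrite -mulnn; nia.
have P0 : forall S : {set 'I_(m ^ 2)}, 0 <= dsub (R:=R) m k S := @dsub_ge0 R (m ^ 2) m k.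
have P1 := @dsub_sum R (m ^ 2) m k mn kn.
have -> : forall E, prob_samples (R:=R) m k (M:=M) E = Pr (dsub m k) E by [].
set F := f setT.
have fb : forall S, 0 <= f S <= F.
  move=> S; apply/andP; split.
    exact: le_trans f0 (fmon _ _ (sub0set S)).
  exact: fmon _ _ (subsetT S).
set nr := (m ^ 2)%:R : R.
have nr1 : 1 <= nr by rewrite /nr ler1n; apply: leq_ltn_trans (leq0n m) mn.
have ee := expR_ge0 (- nr).
have PT : Pr (dsub (R:=R) m k) (fun _ : {ffun 'I_M -> {set 'I_(m ^ 2)}} => true) = 1.
  exact: (Pr_total M P1).
case: (eqVneq F 0) => [FE|FN].
  have fz : forall S, f S = 0.
    move=> S; apply/eqP; rewrite eq_le; case/andP: (fb S) => a b.
    by rewrite a andbT -FE.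
  have ep : 0 <= eps by apply: le_trans heps; rewrite -/F FE mul0r.
  apply: le_trans (_ : _ <= 1) _; first by lra.
  rewrite -[X in X <= _]PT; apply: Pr_le => // s _.
  apply/forallP => i; rewrite /vhat /marg_exp.
  rewrite !big1 ?mul0r ?subrr ?normr0 // => *; by rewrite ?fz ?subrr.
have F0 : 0 < F by rewrite lt0r FN /=; case/andP: (fb setT).
set pn := p.[nr] in heps p0.
have epos : 0 < eps by apply: lt_le_trans heps; apply: divr_gt0.
set rho := if eps / F <= 1 then eps / F else 1.
have rho0 : 0 < rho by rewrite /rho; case: ifP => // _; apply: divr_gt0.
have rho1 : rho <= 1 by rewrite /rho; case: ifP.
have rhoF : rho * F <= eps.
  rewrite /rho; case: ifP => h; first by rewrite divfK.
  move/negbT: h; rewrite -ltNge => h.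
  have e := divfK FN eps.
  set r := eps / F in h e *; nra.
set L := (K.+1)%:R * nr ^+ D.
have pL : pn <= L.
  apply: le_trans (pb _ nr1) _; apply: ler_wpM2r; first by apply: exprn_ge0; lra.
  by rewrite ler_nat.
have L1 : 1 <= L.
  have h1 : 1 <= nr ^+ D by apply: exprn_ege1.
  have h2 : 1 <= (K.+1)%:R :> R by rewrite ler1n.
  by rewrite -[1]mulr1; apply: ler_pM.
have rL : 1 <= rho * L.
  rewrite /rho; case: ifP => h; last by rewrite mul1r.
  have hp : F <= eps * pn by rewrite -ler_pdivrMr.
  have h1 : 1 <= eps * pn / F by rewrite ler_pdivlMr // mul1r.
  apply: le_trans h1 _; rewrite mulrAC; apply: ler_wpM2l => //.
  by apply: divr_ge0; lra.
have Mr : 2304 * nr ^+ 3 * L ^+ 2 <= M%:R.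
  have := hM; rewrite -(ler_nat R) natrM natrX -/nr natrM natrX => h; apply: le_trans h.
  rewrite exprD mulnC exprM /L exprMn le_eqVlt; apply/orP; left; apply/eqP; ring.

have key : forall q, 1 <= 3 * nr * q -> 2 * nr <= rho ^+ 2 * q ^+ 2 * M%:R / 128.
  move=> q hq.
  have q0 : 0 <= q by nra.
  have h1 : rho ^+ 2 * q ^+ 2 * (2304 * nr ^+ 3 * L ^+ 2) <= rho ^+ 2 * q ^+ 2 * M%:R.
    by apply: ler_wpM2l => //; apply: mulr_ge0; apply: exprn_ge0; lra.
  have h2 : rho ^+ 2 * q ^+ 2 * (2304 * nr ^+ 3 * L ^+ 2)
            = 256 * nr * ((rho * L) * (3 * nr * q)) ^+ 2 by ring.
  have h3 : 1 <= ((rho * L) * (3 * nr * q)) ^+ 2.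
    apply: exprn_ege1; have := ler_pM ler01 ler01 rL hq; by rewrite mul1r.
  have h4 : 256 * nr * 1 <= 256 * nr * ((rho * L) * (3 * nr * q)) ^+ 2.
    by apply: ler_wpM2l => //; apply: mulr_ge0 => //; apply: le_trans ler01 nr1.
  lra.
have Pc1 : forall i (x y : {set 'I_(m ^ 2)}), C1 (m ^ 2) m i x -> C1 (m ^ 2) m i y ->
    dsub (R:=R) m k x = dsub m k y.
  move=> i x y /andP[/eqP hx _] /andP[/eqP hy _]; apply: dsub_const; by rewrite hx hy.
have Pc2 : forall i (x y : {set 'I_(m ^ 2)}), C2 (m ^ 2) m i x -> C2 (m ^ 2) m i y ->
    dsub (R:=R) m k x = dsub m k y.
  move=> i x y /andP[/eqP hx _] /andP[/eqP hy _]; apply: dsub_const; by rewrite hx hy.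
have Cne2 : forall i, (0 < #|[set S | C2 (m ^ 2) m i S]|)%N.
  by move=> i; rewrite cardC2 bin_gt0; case: (m ^ 2)%N mn.
have Cne1 : forall i, (0 < #|[set S | C1 (m ^ 2) m i S]|)%N.
  by move=> i; rewrite (cardC1C2 R); apply: Cne2.
have b1 : forall i, Pr (dsub (R:=R) m k) (@badC R _ (dsub m k) M (C1 (m ^ 2) m i) f F rho)
    <= 3 * expR (- (2 * nr)).
  move=> i; apply: (badC_bound P0 P1 (Pc1 i) (Cne1 i) fb F0 rho0 rho1).
  by apply: key; apply: (q1_lb R (m ^ 2) m k i mn).
have b2 : forall i, Pr (dsub (R:=R) m k) (@badC R _ (dsub m k) M (C2 (m ^ 2) m i) f F rho)
    <= 3 * expR (- (2 * nr)).
  move=> i; apply: (badC_bound P0 P1 (Pc2 i) (Cne2 i) fb F0 rho0 rho1).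
  by apply: key; apply: (q2_lb R (m ^ 2) m k i mn).
set bad := fun s : {ffun 'I_M -> {set 'I_(m ^ 2)}} => [exists i,
   @badC R _ (dsub m k) M (C1 (m ^ 2) m i) f F rho s
   || @badC R _ (dsub m k) M (C2 (m ^ 2) m i) f F rho s].
have Pbad : Pr (dsub (R:=R) m k) bad <= 6 * nr * expR (- (2 * nr)).
  apply: le_trans (Pr_exists P0 _) _.
  apply: le_trans (_ : _ <= \sum_(i < m ^ 2) 6 * expR (- (2 * nr))) _.
    apply: ler_sum => i _; apply: le_trans (Pr_or P0 _ _) _.
    have := b1 i; have := b2 i; lra.
  rewrite sumr_const card_ord -mulr_natr -/nr le_eqVlt; apply/orP; left; apply/eqP; ring.
have hexp : nr * expR (- (2 * nr)) <= expR (- nr).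
  have h := expR_ge1Dx nr.
  have -> : - (2 * nr) = - nr + - nr by ring.
  rewrite expRD mulrA; rewrite -[X in _ <= X]mul1r; apply: ler_wpM2r => //.
  rewrite expRN ler_pdivrMr ?expR_gt0 // mul1r; lra.
have PC := Pr_compl P1 bad.
apply: le_trans (_ : _ <= Pr (dsub (R:=R) m k) (predC bad)) _.
  have := ler_wpM2l (_ : 0 <= 6) hexp; lra.
apply: Pr_le => // s; rewrite /= negb_exists => /forallP H; apply/forallP => i.
have := H i; rewrite negb_or /badC !negb_or => /andP[/and3P[n1 n2 n3] /and3P[n4 n5 n6]].
have d1 := class_det R _ (dsub m k) M P0 (C1 (m ^ 2) m i) f F eps rho F0 rho0 rhoF s n1 n2 n3.
have d2 := class_det R _ (dsub m k) M P0 (C2 (m ^ 2) m i) f F eps rho F0 rho0 rhoF s n4 n5 n6.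
rewrite /vhat (marg_split m i f).
exact: comb_abs d1 d2.
Qed.
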